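(* Let $n,m$ be positive integers, $A_1,\dots,A_m\in\mathbb{S}_n$, $\mathcal{A}(X)=(\langle A_i,X\rangle)_{i=1}^m$, $\mathcal{A}^*(y)=\sum_i y_iA_i$, with $\mathcal{A}\mathcal{A}^*$ invertible; let $b\in\mathbb{R}^m$, $C\in\mathbb{S}_n$, $D:=\mathcal{A}^*((\mathcal{A}\mathcal{A}^* )^{-1}b)$. Assume the problem $\inf\{\langle D,S+C\rangle: y\in\mathbb{R}^m,\ S\succeq0,\ \operatorname{diag}(S)=\mathbf{1},\ S=\mathcal{A}^*(y)-C\}$ admits a KKT point. Let $0<\sigma_{\min}<\sigma_{\max}$ and let $\{\varepsilon_k\},\{\tau_k\}\subseteq(0,\infty)$ with $\sum_k\varepsilon_k<\infty$, $\sum_k\tau_k<\infty$. Consider sequences generated as follows: $y^0=0$, $\widetilde{X}^0=0$, and for $k=0,1,2,\dots$: choose $\sigma_k\in[\sigma_{\min},\sigma_{\max}]$, a positive integer $p_{k+1}$ and $Y^{k+1}\in\mathbb{R}^{n\times p_{k+1}}$ all of whose rows have Euclidean norm $1$; set $S^{k+1}=Y^{k+1}(Y^{k+1})^{\intercal}$, $y^{k+1}=(\mathcal{A}\mathcal{A}^* )^{-1}\mathcal{A}(S^{k+1}+C)$, $\widetilde{X}^{k+1}=\widetilde{X}^k-\sigma_k(\mathcal{A}^*(y^{k+1})-S^{k+1}-C)$, $z^{k+1}=\operatorname{diag}((\widetilde{X}^{k+1}+D)S^{k+1})$, $X^{k+1}=\widetilde{X}^{k+1}+D-\operatorname{Diag}(z^{k+1})$;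 and suppose that for every $k$, $\|X^{k+1}Y^{k+1}\|\le\varepsilon_k$ and $\lambda_{\min}(X^{k+1})\ge-\tau_k$. Let $R^k=\mathcal{A}^*(y^k)-S^k-C$. Then $\lim_{k\to\infty}\|R^k\|=0$.
   Context: $\mathbb{S}_n$ denotes real symmetric $n\times n$ matrices, $\langle A,B\rangle=\mathrm{Tr}(A^{\intercal}B)$, $\|\cdot\|$ the Frobenius norm, $\lambda_{\min}$ the smallest eigenvalue. For a square matrix $M$, $\operatorname{diag}(M)$ is its diagonal vector; for a vector $z$, $\operatorname{Diag}(z)$ is the diagonal matrix with diagonal $z$; $\mathbf{1}$ is the all-ones vector. A KKT point of the stated problem is a tuple $(S,y,X,z)\in\mathbb{S}_n\times\mathbb{R}^m\times\mathbb{S}_n\times\mathbb{R}^n$ with $S=\mathcal{A}^*(y)-C$, $S\succeq0$, $\operatorname{diag}(S)=\mathbf{1}$, $X\succeq0$, $\langle X,S\rangle=0$ and $\mathcal{A}(X+\operatorname{Diag}(z))=b$. *)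

(* Defs.v *)
From HB Require Import structures.
From mathcomp Require Import all_boot all_order all_algebra.
From mathcomp Require Import all_classical all_reals all_analysis.
Set Implicit Arguments. Unset Strict Implicit. Unset Printing Implicit Defensive.
Import Order.TTheory GRing.Theory Num.Theory.
Local Open Scope ring_scope.

Section Defs.
Variable R : realType.

Definition symmx n (A : 'M[R]_n) : Prop := A^T = A.

Definition psd n (A : 'M[R]_n) : Prop :=
  symmx A /\ forall x : 'cV[R]_n, 0 <= (x^T *m A *m x) 0 0.

Definition mxdot p q (A B : 'M[R]_(p, q)) : R := \tr (A^T *m B).

Definition frob p q (A : 'M[R]_(p, q)) : R :=
  Num.sqrt (\sum_(i < p) \sum_(j < q) A i j ^+ 2).

Definition rownorm p q (Y : 'M[R]_(p, q)) (i : 'I_p) : R :=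
  Num.sqrt (\sum_(j < q) Y i j ^+ 2).

Definition mdiag n (M : 'M[R]_n) : 'cV[R]_n := \col_i M i i.
Definition Mdiag n (z : 'cV[R]_n) : 'M[R]_n := diag_mx z^T.

Definition opA m n (Am : 'I_m -> 'M[R]_n) (X : 'M[R]_n) : 'cV[R]_m :=
  \col_i mxdot (Am i) X.
Definition opAadj m n (Am : 'I_m -> 'M[R]_n) (y : 'cV[R]_m) : 'M[R]_n :=
  \sum_(i < m) y i 0 *: Am i.
(* the matrix of A A^* *)
Definition AAs m n (Am : 'I_m -> 'M[R]_n) : 'M[R]_m :=
  \matrix_(i, j) mxdot (Am i) (Am j).

(* KKT point of inf {<D,S+C> : S = A^*(y) - C, S psd, diag S = 1} *)
Definition KKT_point m n (Am : 'I_m -> 'M[R]_n) (b : 'cV[R]_m) (C : 'M[R]_n)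
  (S : 'M[R]_n) (y : 'cV[R]_m) (X : 'M[R]_n) (z : 'cV[R]_n) : Prop :=
  S = opAadj Am y - C /\ psd S /\ mdiag S = const_mx 1 /\ psd X /\
  mxdot X S = 0 /\ opA Am (X + Mdiag z) = b.
End Defs.

(* Main.v *)
Require Import Defs.
From HB Require Import structures.
From mathcomp Require Import all_boot all_order all_algebra.
From mathcomp Require Import all_classical all_reals all_analysis.
From mathcomp Require Import sesquilinear spectral.
From mathcomp.real_closed Require Import complex.
From mathcomp Require Import ring lra.
Import Order.TTheory GRing.Theory Num.Theory.
Import numFieldNormedType.Exports.
Local Open Scope ring_scope.
Section T.
Context {R : realType}.
Notation cRe := complex.Re.
Notation cIm := complex.Im.
Lemma ReD (x y : R[i]) : cRe (x + y) = cRe x + cRe y. Proof. by destruct x, y. Qed.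
Lemma ImD (x y : R[i]) : cIm (x + y) = cIm x + cIm y. Proof. by destruct x, y. Qed.
Lemma Re_sum I (r : seq I) (F : I -> R[i]) : cRe (\sum_(i <- r) F i) = \sum_(i <- r) cRe (F i).
Proof. exact: (big_morph _ ReD). Qed.
Lemma Im_sum I (r : seq I) (F : I -> R[i]) : cIm (\sum_(i <- r) F i) = \sum_(i <- r) cIm (F i).
Proof. exact: (big_morph _ ImD). Qed.

Lemma quadE n (S : 'M[R]_n) (x : 'cV[R]_n) :
  (x^T *m S *m x) 0 0 = \sum_j \sum_k x j 0 * S j k * x k 0.
Proof.
rewrite mxE exchange_big /=; apply: eq_bigr => j _.
rewrite mxE big_distrl /=; apply: eq_bigr => k _; by rewrite !mxE.
Qed.

Lemma cquad n (S : 'M[R]_n) (u : 'I_n -> R[i]) : symmx S ->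
  (forall x : 'cV[R]_n, 0 <= (x^T *m S *m x) 0 0) ->
  0 <= \sum_j \sum_k u j * ((S j k)%:C)%C * Num.conj (u k).
Proof.
move=> Ssym Spsd.
pose a : 'cV[R]_n := \col_j cRe (u j); pose b : 'cV[R]_n := \col_j cIm (u j).
have ue j : u j = Complex (a j 0) (b j 0) by rewrite !mxE; destruct (u j).
rewrite lecE /= Re_sum Im_sum; apply/andP; split.
  apply/eqP.
  transitivity (\sum_j \sum_k (S j k * b j 0 * a k 0) - \sum_j \sum_k (S j k * a j 0 * b k 0)).
    rewrite -sumrB; apply: eq_bigr => j _; rewrite Im_sum -sumrB; apply: eq_bigr => k _.
    rewrite !ue /=; ring.
  apply/eqP; rewrite subr_eq0; apply/eqP; rewrite exchange_big /=.
  apply: eq_bigr => j _; apply: eq_bigr => k _.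
  have -> : S k j = S j k by rewrite -{1}Ssym mxE.
  ring.
have -> : \sum_j cRe (\sum_k u j * ((S j k)%:C)%C * Num.conj (u k)) =
   (a^T *m S *m a) 0 0 + (b^T *m S *m b) 0 0.
  rewrite !quadE -big_split; apply: eq_bigr => j _ /=.
  rewrite Re_sum -big_split; apply: eq_bigr => k _ /=.
  rewrite !ue /=; ring.
by apply: addr_ge0.
Qed.

Local Notation f := (real_complex R).

Lemma eig_real n (X : 'M[R]_n) (r : R) :
  eigenvalue (map_mx f X) (f r) -> eigenvalue X r.
Proof.
by rewrite !eigenvalue_root_char -map_char_poly fmorph_root.
Qed.

Lemma trace_eig_bound n (X S0 : 'M[R]_n) (t : R) :
  symmx X -> psd S0 -> (forall a, eigenvalue X a -> -t <= a) ->
  0 <= mxdot S0 X + t * \tr S0.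
Proof.
move=> Xsym [S0sym S0psd] Xeig.
pose Xc := map_mx f X.
have Xs : Xc \is symmetricmx.
  apply/is_hermitianmxP; rewrite expr0 scale1r map_mx_id // /Xc map_trmx.
  by rewrite Xsym.
have Xr : Xc \is a realmx.
  apply/mxOverP => i j; rewrite mxE.
  by rewrite complex_real.
have /orthomx_spectralP Xe := symmetric_normalmx Xs Xr.
have dr := hermitian_spectral_diag_real (realsym_hermsym Xs Xr).
set P := spectralmx Xc in Xe; set d := spectral_diag Xc in Xe dr.
have Pu : P \is unitarymx by apply: spectral_unitarymx.
have PU : P \in unitmx by apply: unitarymx_unit.
have deig : forall i, 0 <= d 0 i + f t.
  move=> i.
  have : d 0 i \is Num.real by move/mxOverP: dr; apply.
  case/complex_realP => r dre.
  have : eigenvalue Xc (d 0 i).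
    apply/eigenvalueP; exists (row i P).
      rewrite -row_mul Xe !mulmxA mulmxV // mul1mx row_mul.
      apply/rowP => j; rewrite !mxE (bigD1 i) //= !mxE eqxx mulr1n big1 ?addr0 // => k ki; rewrite !mxE eq_sym (negPf ki) mulr0n mul0r.
      by [].
    apply/eqP => r0.

    have := mulmxV PU. move/(congr1 (row i)). rewrite row_mul r0 mul0mx.
    move/rowP/(_ i); rewrite !mxE eqxx => /eqP; by rewrite eq_sym oner_eq0.
  rewrite dre => /eig_real /Xeig ht.
  by rewrite -rmorphD ler0c -lerBlDr sub0r.
pose S0c := map_mx f S0.
pose Q := P *m S0c *m invmx P.
have Qge : forall i, 0 <= Q i i.
  move=> i; rewrite /Q invmx_unitary // mxE.
  have -> : \sum_j (P *m S0c) i j * (P ^t Num.conj)%sesqui j i =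
     \sum_j \sum_k P i j * ((S0 j k)%:C)%C * Num.conj (P i k).
    rewrite exchange_big /=; apply: eq_bigr => k _.
    rewrite !mxE big_distrl /=; apply: eq_bigr => j _; by rewrite !mxE.
  exact: cquad.
rewrite -ler0c rmorphD rmorphM /mxdot S0sym -!trace_map_mx map_mxM -/S0c -/Xc Xe.
have -> : \tr (S0c *m (invmx P *m diag_mx d *m P)) = \tr (Q *m diag_mx d).
  by rewrite mulmxA mxtrace_mulC /Q !mulmxA.
have -> : \tr S0c = \tr Q.
  by rewrite /Q mxtrace_mulC !mulmxA mulVmx // mul1mx.
rewrite /mxtrace mulr_sumr -big_split /=; apply: sumr_ge0 => i _.
rewrite mul_mx_diag mxE [_ * Q i i]mulrC -mulrDr; apply: mulr_ge0; [exact: Qge | exact: deig].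
Qed.

Lemma mxdotE {p q} (A B : 'M[R]_(p, q)) : mxdot A B = \sum_i \sum_j A i j * B i j.
Proof.
rewrite /mxdot /mxtrace; under eq_bigr do rewrite mxE.
rewrite exchange_big; apply: eq_bigr => i _; apply: eq_bigr => j _; by rewrite mxE.
Qed.

Lemma mxdotC {p q} (A B : 'M[R]_(p, q)) : mxdot A B = mxdot B A.
Proof. rewrite !mxdotE; apply: eq_bigr => i _; apply: eq_bigr => j _; exact: mulrC. Qed.

Lemma mxdotDl {p q} (A B E : 'M[R]_(p, q)) : mxdot (A + B) E = mxdot A E + mxdot B E.
Proof.
rewrite !mxdotE -big_split; apply: eq_bigr => i _; rewrite -big_split.
apply: eq_bigr => j _; by rewrite mxE mulrDl.
Qed.

Lemma mxdotNl {p q} (A E : 'M[R]_(p, q)) : mxdot (- A) E = - mxdot A E.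
Proof.
rewrite !mxdotE -sumrN; apply: eq_bigr => i _; rewrite -sumrN.
apply: eq_bigr => j _; by rewrite mxE mulNr.
Qed.

Lemma mxdotZl {p q} c (A E : 'M[R]_(p, q)) : mxdot (c *: A) E = c * mxdot A E.
Proof.
rewrite !mxdotE mulr_sumr; apply: eq_bigr => i _; rewrite mulr_sumr.
apply: eq_bigr => j _; by rewrite mxE mulrA.
Qed.

Lemma mxdotBl {p q} (A B E : 'M[R]_(p, q)) : mxdot (A - B) E = mxdot A E - mxdot B E.
Proof. by rewrite mxdotDl mxdotNl. Qed.

Lemma mxdotDr {p q} (A B E : 'M[R]_(p, q)) : mxdot E (A + B) = mxdot E A + mxdot E B.
Proof. by rewrite !(mxdotC E) mxdotDl. Qed.
Lemma mxdotNr {p q} (A E : 'M[R]_(p, q)) : mxdot E (- A) = - mxdot E A.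
Proof. by rewrite !(mxdotC E) mxdotNl. Qed.
Lemma mxdotBr {p q} (A B E : 'M[R]_(p, q)) : mxdot E (A - B) = mxdot E A - mxdot E B.
Proof. by rewrite !(mxdotC E) mxdotBl. Qed.
Lemma mxdotZr {p q} c (A E : 'M[R]_(p, q)) : mxdot E (c *: A) = c * mxdot E A.
Proof. by rewrite !(mxdotC E) mxdotZl. Qed.
Lemma mxdot0l {p q} (E : 'M[R]_(p, q)) : mxdot 0 E = 0.
Proof. by rewrite -(scale0r 0) mxdotZl mul0r. Qed.
Lemma mxdot0r {p q} (E : 'M[R]_(p, q)) : mxdot E 0 = 0.
Proof. by rewrite mxdotC mxdot0l. Qed.

Lemma mxdot_expand {p q} (A B : 'M[R]_(p, q)) c :
  mxdot (A + c *: B) (A + c *: B) = mxdot A A + 2 * c * mxdot A B + c ^+ 2 * mxdot B B.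
Proof. rewrite mxdotDl !mxdotDr !mxdotZl !mxdotZr (mxdotC B A); ring. Qed.

Lemma mxdot_ge0 {p q} (A : 'M[R]_(p, q)) : 0 <= mxdot A A.
Proof. rewrite mxdotE; apply: sumr_ge0 => i _; apply: sumr_ge0 => j _; by rewrite -expr2 sqr_ge0. Qed.

Lemma frobE {p q} (A : 'M[R]_(p, q)) : frob A = Num.sqrt (mxdot A A).
Proof. by rewrite /frob mxdotE; under eq_bigr do under eq_bigr do rewrite expr2. Qed.

Lemma mxdot_suml {p q} k (A : 'I_k -> 'M[R]_(p, q)) E :
  mxdot (\sum_i A i) E = \sum_i mxdot (A i) E.
Proof.
apply: (big_ind2 (fun x y => mxdot x E = y)); first exact: mxdot0l.
  by move=> x1 x2 y1 y2 <- <-; rewrite mxdotDl.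
by [].
Qed.

Lemma mxdot_sumr {p q} k (A : 'I_k -> 'M[R]_(p, q)) E :
  mxdot E (\sum_i A i) = \sum_i mxdot E (A i).
Proof. rewrite mxdotC mxdot_suml; apply: eq_bigr => i _; exact: mxdotC. Qed.

Lemma cs_bound {p q} (A B : 'M[R]_(p, q)) (t : R) : 0 < t ->
  mxdot A B <= (t * mxdot A A + mxdot B B / t) / 2.
Proof.
move=> t0; have h := mxdot_ge0 (t *: A - B).
rewrite mxdotBl !mxdotBr !mxdotZl !mxdotZr (mxdotC B A) in h.
rewrite -subr_ge0.
have -> : (t * mxdot A A + mxdot B B / t) / 2 - mxdot A B =
  (t * (t * mxdot A A) - t * mxdot A B - (t * mxdot A B - mxdot B B)) / (2 * t).
  by field; rewrite gt_eqF.
by apply: divr_ge0 => //; apply: mulr_ge0 => //; apply: ltW.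
Qed.

Lemma YY_dot n p (Y : 'M[R]_(n, p)) (X : 'M[R]_n) :
  mxdot (Y *m Y^T) X = mxdot Y (X *m Y).
Proof.
rewrite /mxdot trmx_mul trmxK -mulmxA mxtrace_mulC.
by rewrite mulmxA.
Qed.

Lemma YY_psd n p (Y : 'M[R]_(n, p)) (X : 'M[R]_n) :
  (forall x : 'cV[R]_n, 0 <= (x^T *m X *m x) 0 0) -> 0 <= mxdot (Y *m Y^T) X.
Proof.
move=> Xpsd; rewrite YY_dot /mxdot /mxtrace; apply: sumr_ge0 => l _.
have -> : (Y^T *m (X *m Y)) l l = ((col l Y)^T *m X *m col l Y) 0 0.
  rewrite quadE mxE; apply: eq_bigr => k _; rewrite !mxE.
  rewrite big_distrr /=; apply: eq_bigr => j _; rewrite !mxE; ring.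
exact: Xpsd.
Qed.


Section Op.
Variables (m n : nat) (Am : 'I_m -> 'M[R]_n).

Lemma opA_D (A B : 'M[R]_n) : opA Am (A + B) = opA Am A + opA Am B.
Proof. by apply/colP => i; rewrite !mxE mxdotDr. Qed.
Lemma opA_B (A B : 'M[R]_n) : opA Am (A - B) = opA Am A - opA Am B.
Proof. by apply/colP => i; rewrite !mxE mxdotBr. Qed.
Lemma opA_Z c (A : 'M[R]_n) : opA Am (c *: A) = c *: opA Am A.
Proof. by apply/colP => i; rewrite !mxE mxdotZr. Qed.
Lemma opA_0 : opA Am 0 = 0.
Proof. by apply/colP => i; rewrite !mxE mxdot0r. Qed.

Lemma opA_adj y : opA Am (opAadj Am y) = AAs Am *m y.
Proof.
apply/colP => i; rewrite !mxE /opAadj mxdot_sumr; apply: eq_bigr => j _.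
by rewrite mxdotZr !mxE mulrC.
Qed.

Lemma adj_dot y W : mxdot (opAadj Am y) W = \sum_i y i 0 * (opA Am W) i 0.
Proof. by rewrite /opAadj mxdot_suml; apply: eq_bigr => i _; rewrite mxdotZl mxE. Qed.

Lemma orth_of W : opA Am W = 0 -> forall u, mxdot (opAadj Am u) W = 0.
Proof. by move=> h u; rewrite adj_dot h big1 // => i _; rewrite mxE mulr0. Qed.

Lemma adj_sym y : (forall i, symmx (Am i)) -> symmx (opAadj Am y).
Proof.
move=> As; have Ae k i j : Am k j i = Am k i j by rewrite -{1}(As k) mxE.
apply/matrixP => i j; rewrite mxE /opAadj !summxE; apply: eq_bigr => k _.
by rewrite !mxE Ae.
Qed.
End Op.

Lemma sym_add n (A B : 'M[R]_n) : symmx A -> symmx B -> symmx (A + B).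
Proof.
move=> /matrixP hA /matrixP hB; apply/matrixP => i j.
by rewrite !mxE -(hA i j) -(hB i j) !mxE.
Qed.
Lemma sym_opp n (A : 'M[R]_n) : symmx A -> symmx (- A).
Proof. by move=> /matrixP hA; apply/matrixP => i j; rewrite !mxE -(hA i j) !mxE. Qed.
Lemma sym_sub n (A B : 'M[R]_n) : symmx A -> symmx B -> symmx (A - B).
Proof. by move=> hA hB; apply: sym_add => //; apply: sym_opp. Qed.
Lemma sym_scale n c (A : 'M[R]_n) : symmx A -> symmx (c *: A).
Proof. by move=> /matrixP hA; apply/matrixP => i j; rewrite !mxE -(hA i j) !mxE. Qed.

Lemma Mdiag_sym n (w : 'cV[R]_n) : symmx (Mdiag w).
Proof. by rewrite /symmx /Mdiag tr_diag_mx. Qed.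

Lemma Mdiag_dot n (V : 'M[R]_n) (w : 'cV[R]_n) :
  (forall i, V i i = 1) -> mxdot V (Mdiag w) = \sum_i w i 0.
Proof.
move=> V1; rewrite mxdotE; apply: eq_bigr => i _.
rewrite (bigD1 i) //= big1 ?addr0 ?mxE ?eqxx ?mulr1n ?V1 ?mul1r //.
by move=> j ji; rewrite !mxE eq_sym (negPf ji) mulr0n mulr0.
Qed.

Lemma series_homo (u : nat -> R) : (forall k, 0 <= u k) ->
  {homo series u : a b / (a <= b)%N >-> a <= b}.
Proof.
move=> u0 a b; elim: b => [|b IH]; first by rewrite leqn0 => /eqP ->.
rewrite leq_eqVlt => /orP [/eqP -> //|]; rewrite ltnS => /IH h.
by rewrite seriesSr; apply: (le_trans h); rewrite lerDl.
Qed.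

End T.

Local Open Scope classical_set_scope.
Local Open Scope ring_scope.

Theorem lemma5p3 (R : realType) (n m : nat) (Am : 'I_m -> 'M[R]_n)
  (b : 'cV[R]_m) (C : 'M[R]_n)
  (sigma_min sigma_max : R) (eps tau : nat -> R)
  (sigma : nat -> R) (p : nat -> nat) (Y : forall k : nat, 'M[R]_(n, p k))
  (S : nat -> 'M[R]_n) (y : nat -> 'cV[R]_m) (Xt : nat -> 'M[R]_n)
  (z : nat -> 'cV[R]_n) (X : nat -> 'M[R]_n) :
  (0 < n)%N -> (0 < m)%N ->
  (forall i, symmx (Am i)) -> symmx C ->
  AAs Am \in unitmx ->
  let D := opAadj Am (invmx (AAs Am) *m b) in
  (exists S0 y0 X0 z0, KKT_point Am b C S0 y0 X0 z0) ->
  0 < sigma_min -> sigma_min < sigma_max ->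
  (forall k, 0 < eps k) -> (forall k, 0 < tau k) ->
  cvgn (series eps) -> cvgn (series tau) ->
  y 0%N = 0 -> Xt 0%N = 0 ->
  (forall k, sigma_min <= sigma k <= sigma_max) ->
  (forall k, (0 < p k.+1)%N) ->
  (forall k (i : 'I_n), rownorm (Y k.+1) i = 1) ->
  (forall k, S k.+1 = Y k.+1 *m (Y k.+1)^T) ->
  (forall k, y k.+1 = invmx (AAs Am) *m opA Am (S k.+1 + C)) ->
  (forall k, Xt k.+1 = Xt k - sigma k *: (opAadj Am (y k.+1) - S k.+1 - C)) ->
  (forall k, z k.+1 = mdiag ((Xt k.+1 + D) *m S k.+1)) ->
  (forall k, X k.+1 = Xt k.+1 + D - Mdiag (z k.+1)) ->
  (forall k, frob (X k.+1 *m Y k.+1) <= eps k) ->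
  (forall k a, eigenvalue (X k.+1) a -> - tau k <= a) ->
  (fun k => frob (opAadj Am (y k) - S k - C)) @ \oo --> (0 : R).
Proof.
move=> n0 m0 Asym Csym AU D [S0 [y0 [X0 [z0 [S0e [S0psd [S0d [X0psd [XS0 bW]]]]]]]]].
move=> sp slt epos tpos ecvg tcvg y0e Xt0 sbd ppos Yrow Se ye Xte ze Xe XY Xeig.
pose Rk k := opAadj Am (y k) - S k - C.
pose L := X0 + Mdiag z0 - D.
pose e k := Xt k - L.
have Dop : opA Am D = b by rewrite /D opA_adj mulmxA mulmxV // mul1mx.
have LA : opA Am L = 0 by rewrite /L opA_B bW Dop subrr.
have RA k : opA Am (Rk k.+1) = 0.
  rewrite /Rk !opA_B opA_adj ye mulmxA mulmxV // mul1mx opA_D.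
  by rewrite [opA Am (S k.+1) + _]addrC addrK subrr.
have XtA k : opA Am (Xt k) = 0.
  elim: k => [|k IH]; first by rewrite Xt0 opA_0.
  by rewrite Xte opA_B opA_Z RA IH scaler0 subrr.
have eA k : opA Am (e k) = 0 by rewrite /e opA_B XtA LA subrr.
have Dsym : symmx D by apply: adj_sym.
have Ssym k : symmx (S k.+1) by rewrite /symmx Se trmx_mul trmxK.
have Xtsym k : symmx (Xt k).
  elim: k => [|k IH]; first by rewrite /symmx Xt0 trmx0.
  rewrite Xte; apply: sym_sub => //; apply: sym_scale.
  by apply: sym_sub => //; apply: sym_sub => //; apply: adj_sym.
have Xsym k : symmx (X k.+1).
  by rewrite Xe; apply: sym_sub; [apply: sym_add | apply: Mdiag_sym].
have Sdiag k i : S k.+1 i i = 1.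
  rewrite Se mxE; have := Yrow k i; rewrite /rownorm => h.
  have s0 : 0 <= \sum_j Y k.+1 i j ^+ 2 by apply: sumr_ge0 => j _; exact: sqr_ge0.
  rewrite -(expr1n _ 2) -h sqr_sqrtr //; apply: eq_bigr => j _; by rewrite mxE expr2.
have S0diag i : S0 i i = 1 by move/colP: S0d => /(_ i); rewrite !mxE.
have YY k : mxdot (Y k.+1) (Y k.+1) = n%:R.
  rewrite mxdotE (eq_bigr (fun _ => 1)) ?sumr_const ?card_ord //.
  move=> i _; rewrite -(Sdiag k i) Se mxE; apply: eq_bigr => j _; by rewrite mxE.
have trS0 : \tr S0 = n%:R.
  by rewrite /mxtrace (eq_bigr (fun _ => 1)) ?sumr_const ?card_ord // => i _; rewrite S0diag.
pose dl k := (n%:R + 1) / 2 * eps k + n%:R * tau k.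
have key k : mxdot (- Rk k.+1) (e k.+1) <= dl k.
  have orthe := @orth_of R m n Am _ (eA k.+1).
  have h1 : mxdot (- Rk k.+1) (e k.+1) = mxdot (S k.+1) (e k.+1) - mxdot S0 (e k.+1).
    rewrite /Rk mxdotNl !mxdotBl orthe S0e mxdotBl orthe; lra.
  have hE V : mxdot V (e k.+1) = mxdot V (X k.+1) + mxdot V (Mdiag (z k.+1))
                 - mxdot V X0 - mxdot V (Mdiag z0).
    rewrite /e /L Xe !(mxdotDr, mxdotNr); lra.
  rewrite h1 !hE !Mdiag_dot //.
  have a1 : 0 <= mxdot (S k.+1) X0 by rewrite Se; apply: YY_psd; case: X0psd.
  have a2 : mxdot S0 X0 = 0 by rewrite mxdotC.
  have a3 : 0 <= mxdot S0 (X k.+1) + tau k * n%:R.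
    by rewrite -trS0; apply: trace_eig_bound => //; apply: Xeig.
  have a4 : mxdot (S k.+1) (X k.+1) <= (n%:R + 1) / 2 * eps k.
    rewrite Se YY_dot; apply: (le_trans (cs_bound _ _ _ (epos k))).
    rewrite YY.
    have : mxdot (X k.+1 *m Y k.+1) (X k.+1 *m Y k.+1) / eps k <= eps k.
      set Z := X k.+1 *m Y k.+1.
      have sq : mxdot Z Z = frob Z * frob Z by rewrite frobE -expr2 sqr_sqrtr // mxdot_ge0.
      have f0 : 0 <= frob Z by rewrite frobE sqrtr_ge0.
      rewrite ler_pdivrMr // sq; apply: ler_pM => //.
    move=> hb; rewrite /dl; lra.
  rewrite /dl; lra.
have tele k : sigma_min ^+ 2 * mxdot (Rk k.+1) (Rk k.+1) <=
    mxdot (e k) (e k) - mxdot (e k.+1) (e k.+1) + 2 * sigma_max * dl k.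
  have ee : e k = e k.+1 + sigma k *: Rk k.+1.
    by rewrite /e Xte -/(Rk k.+1) addrAC subrK.
  have kk := key k; rewrite mxdotNl in kk.
  rewrite ee mxdot_expand.
  have /andP [s1 s2] := sbd k.
  have sk0 : 0 < sigma k by apply: lt_le_trans s1.
  have d0 : 0 <= dl k.
    have e0 := ltW (epos k); have t0 := ltW (tpos k).
    have n0' : 0 <= n%:R :> R by [].
    have c0 : 0 <= (n%:R + 1) / 2 :> R by apply: divr_ge0 => //; apply: addr_ge0.
    by rewrite /dl; apply: addr_ge0; apply: mulr_ge0.
  have N0 := mxdot_ge0 (Rk k.+1).
  have h1 : - (sigma k * mxdot (e k.+1) (Rk k.+1)) <= sigma k * dl k.
    by rewrite -mulrN; apply: ler_wpM2l; [exact: ltW | rewrite mxdotC].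
  have h2 : sigma k * dl k <= sigma_max * dl k by apply: ler_wpM2r.
  have h3 : sigma_min ^+ 2 <= sigma k ^+ 2 by rewrite ler_pXn2r // ?nnegrE ltW.
  have h4 : sigma_min ^+ 2 * mxdot (Rk k.+1) (Rk k.+1) <=
            sigma k ^+ 2 * mxdot (Rk k.+1) (Rk k.+1) by apply: ler_wpM2r.
  rewrite expr2 in h4; lra.
pose a k := sigma_min ^+ 2 * mxdot (Rk k.+1) (Rk k.+1).
have a0 k : 0 <= a k by apply: mulr_ge0; [exact: sqr_ge0 | exact: mxdot_ge0].
have s0 (u : nat -> R) : series u 0 = 0 by rewrite /series /= big_geq.
have sumb N : series a N <=
    mxdot (e 0%N) (e 0%N) - mxdot (e N) (e N) + 2 * sigma_max * series dl N.
  elim: N => [|N IH]; first by rewrite !s0 subrr mulr0 addr0.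
  rewrite !seriesSr mulrDr; have := tele N; rewrite -/(a N); lra.
have eb N : series eps N <= limn (series eps).
  exact: (nondecreasing_cvgn_le (series_homo _ (fun k => ltW (epos k))) ecvg N).
have tb N : series tau N <= limn (series tau).
  exact: (nondecreasing_cvgn_le (series_homo _ (fun k => ltW (tpos k))) tcvg N).
have dlE N : series dl N = (n%:R + 1) / 2 * series eps N + n%:R * series tau N.
  elim: N => [|N IH]; first by rewrite !s0 !mulr0 addr0.
  rewrite !seriesSr IH /dl; ring.
pose B := mxdot (e 0%N) (e 0%N) + 2 * sigma_max *
   ((n%:R + 1) / 2 * limn (series eps) + n%:R * limn (series tau)).
have sb N : series a N <= B.
  have h0 := mxdot_ge0 (e N); have h := sumb N; rewrite dlE in h.
  have c0 : 0 <= (n%:R + 1) / 2 :> R by apply: divr_ge0 => //; apply: addr_ge0.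
  have h1 : (n%:R + 1) / 2 * series eps N <= (n%:R + 1) / 2 * limn (series eps).
    exact: ler_wpM2l.
  have h2 : n%:R * series tau N <= n%:R * limn (series tau) by apply: ler_wpM2l.
  have smax0 : 0 <= 2 * sigma_max.
    apply: mulr_ge0 => //; apply: ltW; apply: lt_trans slt; exact: sp.
  have h3 : 2 * sigma_max * ((n%:R + 1) / 2 * series eps N + n%:R * series tau N)
      <= 2 * sigma_max * ((n%:R + 1) / 2 * limn (series eps) + n%:R * limn (series tau)).
    by apply: ler_wpM2l => //; apply: lerD.
  rewrite /B; lra.
have acvg : cvgn (series a).
  apply: (nondecreasing_is_cvgn (series_homo _ a0)).
  by exists B => _ [N _ <-]; exact: sb N.
have a_to0 := cvg_series_cvg_0 acvg.
have N2to0 : (fun k => mxdot (Rk k.+1) (Rk k.+1)) @ \oo --> (0 : R).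
  have -> : (fun k => mxdot (Rk k.+1) (Rk k.+1)) = (fun k => sigma_min ^- 2 * a k).
    apply/funext => k; rewrite /a mulrA mulVf ?mul1r // expf_neq0 // gt_eqF //.
  rewrite -(mulr0 (sigma_min ^- 2)); exact: cvgMl_tmp.
rewrite -cvg_shiftS /=.
have -> : (fun k => frob (opAadj Am (y k.+1) - S k.+1 - C)) =
    (Num.sqrt \o (fun k => mxdot (Rk k.+1) (Rk k.+1))).
  by apply/funext => k; rewrite /= frobE.
have := cvg_comp _ _ N2to0 (@sqrt_continuous R 0).
by rewrite sqrtr0.
Qed.
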